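(* For all $n\ge 2$, $\delta(n,2)=n-1$.
   Context: Strings here are arbitrary (not normalized) finite words. The prefix reversal (flip) $f^{(i)}$ applied to $s=s_1\cdots s_n$ ($1\le i\le n$) yields $s_i s_{i-1}\cdots s_1 s_{i+1}\cdots s_n$. Two strings are \emph{compatible} if each symbol occurs the same number of times in both. For compatible $s,t$, $d(s,t)$ is the minimum number of prefix reversals transforming $s$ into $t$. $S(n,k)$ is the set of strings of length $n$ whose set of occurring symbols is exactly $\{0,\dots,k-1\}$, and $\delta(n,k)$ is the maximum of $d(s,t)$ over all compatible pairs $s,t\in S(n,k)$. *)

(* Defs.v *)
From mathcomp Require Import all_boot.
Set Implicit Arguments. Unset Strict Implicit. Unset Printing Implicit Defensive.

Definition flip (i : nat) (s : seq nat) : seq nat := rev (take i s) ++ drop i s.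

Fixpoint reach (k : nat) (s t : seq nat) : Prop :=
  match k with
  | 0 => s = t
  | k'.+1 => exists i, 1 <= i <= size s /\ reach k' (flip i s) t
  end.

Definition compatible (s t : seq nat) : Prop := forall a : nat, count_mem a s = count_mem a t.

Definition is_dist (s t : seq nat) (d : nat) : Prop :=
  reach d s t /\ (forall k, reach k s t -> d <= k).

Definition inS (n k : nat) (s : seq nat) : Prop :=
  size s = n /\ (forall a, a \in s <-> a < k).

Definition is_delta (n k m : nat) : Prop :=
  (forall s t, inS n k s -> inS n k t -> compatible s t ->
     exists d, is_dist s t d /\ d <= m) /\
  (exists s t, [/\ inS n k s, inS n k t, compatible s t & is_dist s t m]).

(* Main.v *)
Require Import Defs.
From mathcomp Require Import all_boot zify.
From Stdlib Require Import Classical.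

Lemma size_flip i s : size (flip i s) = size s.
Proof. by rewrite /flip size_cat size_rev -size_cat cat_take_drop. Qed.

Lemma count_flip (a : pred nat) i s : count a (flip i s) = count a s.
Proof. by rewrite /flip count_cat count_rev -count_cat cat_take_drop. Qed.

Lemma flipK i s : i <= size s -> flip i (flip i s) = s.
Proof.
move=> hi; rewrite /flip.
have hs : size (rev (take i s)) = i by rewrite size_rev size_takel.
by rewrite take_size_cat // drop_size_cat // revK cat_take_drop.
Qed.

Lemma flip1 s : 1 <= size s -> flip 1 s = s.
Proof. by case: s => //= x s _; rewrite /flip /= take0 drop0. Qed.

Lemma flip_size s : flip (size s) s = rev s.
Proof. by rewrite /flip take_size drop_size cats0. Qed.

Lemma flip_cat i p w : i <= size p -> flip i (p ++ w) = flip i p ++ w.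
Proof.
move=> hi; rewrite /flip takel_cat // drop_cat.
case: ltnP => h; first by rewrite -catA.
have -> : i = size p by apply/eqP; rewrite eqn_leq hi h.
by rewrite subnn drop0 drop_size cats0.
Qed.

Lemma reach_cat a b p r q : reach a p r -> reach b r q -> reach (a + b) p q.
Proof.
elim: a p => [|a IH] p /=; first by move=> ->.
by move=> [i [hi hr]] hb; exists i; split => //; apply: IH hb.
Qed.

Lemma reach_size k p q : reach k p q -> size q = size p.
Proof.
elim: k p => [|k IH] p /=; first by move=> ->.
by move=> [i [_ hr]]; rewrite (IH _ hr) size_flip.
Qed.

Lemma reach_sym k p q : reach k p q -> reach k q p.
Proof.
elim: k p => [|k IH] p /=; first by move=> ->.
move=> [i [hi hr]].
have h1 : reach 1 (flip i p) p.
  exists i; split; last by rewrite /= flipK //; case/andP: hi.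
  by rewrite size_flip.
by have := @reach_cat _ _ _ _ _ (IH _ hr) h1; rewrite addn1.
Qed.

Lemma reach_pad1 k p q : 1 <= size p -> reach k p q -> reach k.+1 p q.
Proof. by move=> hp hr; exists 1; rewrite flip1 // hp. Qed.

Lemma reach_pad k k' p q : 1 <= size p -> k <= k' -> reach k p q -> reach k' p q.
Proof.
move=> hp; elim: k' => [|k' IH]; first by rewrite leqn0 => /eqP ->.
rewrite leq_eqVlt => /orP [/eqP -> //|]; rewrite ltnS => hk hr.
by apply: reach_pad1 => //; apply: IH.
Qed.

Lemma reach_app k p q w : reach k p q -> reach k (p ++ w) (q ++ w).
Proof.
elim: k p => [|k IH] p /=; first by move=> ->.
move=> [i [hi hr]]; exists i; split.
  by rewrite size_cat; case/andP: hi => h1 h2; rewrite h1 /= (leq_trans h2) // leq_addr.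
by rewrite flip_cat; [apply: IH | case/andP: hi].
Qed.

Lemma ex_min (P : nat -> Prop) k : P k -> exists d, P d /\ forall j, P j -> d <= j.
Proof.
elim/ltn_ind: k => k IH hk.
case: (classic (exists j, j < k /\ P j)) => [[j [hj pj]]|hn]; first exact: IH pj.
exists k; split => // j pj; rewrite leqNgt; apply/negP => hj; apply: hn; by exists j.
Qed.

Fixpoint bpf (x : nat) (s : seq nat) : nat :=
  match s with [::] => 0 | y :: s' => (x != y) + bpf y s' end.
Definition bp (s : seq nat) := if s is x :: r then bpf x r else 0.
Definition Q s := bp (rcons s 0).

Lemma bpf_cat x s1 s2 : bpf x (s1 ++ s2) = bpf x s1 + bpf (last x s1) s2.
Proof. by elim: s1 x => [|y s IH] x //=; rewrite IH addnA. Qed.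

Lemma bp_cat t c : t != [::] -> bp (t ++ c) = bp t + bpf (last 0 t) c.
Proof. by case: t => // z r _ /=; rewrite bpf_cat. Qed.

Lemma bp_rev x s : bp (rev (x :: s)) = bpf x s.
Proof.
elim: s x => [|y s IH] x //=.
rewrite rev_cons -cats1 bp_cat; last by rewrite rev_cons; case: (rev s).
rewrite IH rev_cons last_rcons /= addn0 addnC eq_sym //.
Qed.

Lemma bpf_head w w' c : bpf w c <= bpf w' c + 1.
Proof. case: c => //= h c; case: (w != h); case: (w' != h) => //=; lia. Qed.

Lemma Q_flip i s : 1 <= i <= size s -> Q s <= Q (flip i s) + 1.
Proof.
case/andP=> hi1 his.
rewrite /Q /flip -(cat_take_drop i s).
rewrite take_size_cat ?size_takel // drop_size_cat ?size_takel //.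
have : take i s != [::] by rewrite -size_eq0 size_takel //; case: i hi1 {his}.
case: (take i s) => // y a _.
rewrite -!cats1 -!catA !bp_cat //; last by rewrite rev_cons; case: (rev a).
rewrite bp_rev rev_cons last_rcons /=.
have := bpf_head (last y a) y (drop i s ++ [:: 0]); lia.
Qed.

Lemma reach_Q k s t : reach k s t -> Q s <= Q t + k.
Proof.
elim: k s => [|k IH] s /=; first by move=> ->; rewrite addn0.
move=> [i [hi hr]]; have := @Q_flip _ _ hi; have := IH _ hr; lia.
Qed.

Definition bin (s : seq nat) := all (fun z => z <= 1) s.

Lemma mem_count (x : nat) (s : seq nat) : (x \in s) = (0 < count_mem x s).
Proof. by rewrite -has_pred1 has_count. Qed.

Lemma compat_sym p q : compatible p q -> compatible q p.
Proof. by move=> h a; rewrite h. Qed.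

Lemma compat_mem p q x : compatible p q -> (x \in p) = (x \in q).
Proof. by move=> h; rewrite !mem_count h. Qed.

Lemma compat_bin p q : bin p -> compatible p q -> bin q.
Proof.
move=> /allP hp h; apply/allP => z hz; apply: hp; by rewrite (@compat_mem _ _ _ h).
Qed.

Lemma compat_catr p q w : compatible (p ++ w) (q ++ w) -> compatible p q.
Proof. move=> h a; have := h a; rewrite !count_cat; lia. Qed.

Lemma L1 (b x : nat) (r : seq nat) : x != b -> b \in r -> exists u y v, x :: r = u ++ y :: b :: v /\ y != b.
Proof.
elim: r x => [|z r IH] x // hx.
rewrite in_cons; case: (eqVneq b z) => [<- _|hz /= hb].
  by exists [::], x, r.
have hz2 : z != b by rewrite eq_sym.
have [u [y [v [-> hy]]]] := IH z hz2 hb.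
by exists (x :: u), y, v.
Qed.

Fixpoint nobb (b : nat) (s : seq nat) : bool :=
  match s with
  | x :: ((y :: _) as s') => ~~ ((x == b) && (y == b)) && nobb b s'
  | _ => true
  end.

Lemma nobbP b s : ~~ nobb b s -> exists u v, s = u ++ b :: b :: v.
Proof.
elim: s => [|x s IH] //=; case: s IH => [|y s] IH //=.
case: (boolP ((x == b) && (y == b))) => [/andP [/eqP -> /eqP ->] _|_ /= h].
  by exists [::], s.
have [u [v ->]] := IH h; by exists (x :: u), v.
Qed.

Lemma count_nobb a b x r : a != b -> all (fun z => (z == a) || (z == b)) (x :: r) ->
  nobb b (x :: r) ->
  count_mem b (x :: r) + (x == a) <= count_mem a (x :: r) + (last x r == b).
Proof.
move=> hab; have h1 : (a == b) = false by apply: negbTE.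
have h2 : (b == a) = false by rewrite eq_sym.
elim: r x => [|y r IH] x /=.
  rewrite !addn0 andbT => /orP [/eqP ->|/eqP ->]; rewrite /= ?eqxx ?h1 ?h2 /=; lia.
move=> /andP [hx /andP [hy hr]] /andP [hxy hn].
have := IH y; rewrite /= hy hr hn => /(_ isT isT) => {IH}.
case/orP: hx hxy => /eqP ->; case/orP: hy => /eqP ->; rewrite /= ?eqxx ?h1 ?h2 /=; lia.
Qed.

Definition UB m := forall p q, size p = m -> size q = m -> bin p -> compatible p q -> reach m.-1 p q.

Lemma branch m (IH : forall k, k < m -> UB k) p q u v d b q2 :
  size p = m -> size q = m -> p = u ++ d :: b :: v -> q = q2 ++ [:: d; b] ->
  bin p -> compatible p q -> reach m.-1 p q.
Proof.
move=> hp hq Ep Eq bp cpq.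
case: q2 Eq => [|z q2] Eq.
  have hm : m = 2 by rewrite -hq Eq.
  have hu : size u + size v = 0 by move: hp; rewrite Ep size_cat /= hm; lia.
  case: u v hu Ep {hp} => [|? ?] [|? ?] //= _ Ep.
  by rewrite hm /= Ep Eq; exists 1.
set r := rev v ++ u.
have Ep' : p = (u ++ [:: d; b]) ++ v by rewrite Ep -catA.
set X := b :: d :: rev u ++ v.
have hX : flip (size u).+2 p = X.
  rewrite Ep' /flip take_size_cat ?size_cat ?addn2 // drop_size_cat ?size_cat ?addn2 //.
  by rewrite rev_cat.
have hsX : size X = size p by rewrite -hX size_flip.
have h2 : reach 2 p (r ++ [:: d; b]).
  exists (size u).+2; split.
    by rewrite hp -hq; move: hp hq; rewrite Ep Eq !size_cat /=; lia.
  rewrite hX; exists (size p); split.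
    by rewrite hsX hp -hq Eq size_cat /= addn2.
  rewrite -{1}hsX flip_size /X /r -cat1s -(cat1s d) !rev_cat revK /= -!catA //.
have hr : size r = size (z :: q2).
  move: hp hq; rewrite Ep Eq /r !size_cat size_rev /=; lia.
have cr : compatible r (z :: q2).
  apply: (@compat_catr _ _ [:: d; b]) => a; rewrite -Eq -cpq Ep /r !count_cat count_rev /=; lia.
have br : bin r.
  move: bp; rewrite Ep /bin /r !all_cat all_rev /=; case/andP=> -> /and3P [_ _ ->] //.
have hlt : size (z :: q2) < m by rewrite -hq Eq size_cat /= addn2.
have h3 := IH _ hlt _ _ hr erefl br cr.
have h4 := @reach_app _ _ _ [:: d; b] h3.
have := @reach_cat _ _ _ _ _ h2 h4; rewrite -Eq.
have -> : 2 + (size (z :: q2)).-1 = m.-1 by rewrite -hq Eq size_cat /= addn2.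
done.
Qed.

Lemma fix1 m (IH : forall k, k < m -> UB k) p q t q' b :
  size p = m -> size q = m -> p = b :: t -> q = rcons q' b ->
  bin p -> compatible p q -> reach m.-1 p q.
Proof.
move=> hp hq Ep Eq bp cpq.
have ht : size t = size q' by move: hp hq; rewrite Ep Eq size_rcons /=; lia.
case: t Ep ht => [|x t] Ep ht.
  by case: q' Eq ht => [|? ?] // Eq _; subst; exact: erefl.
have h1 : reach 1 p (rcons (rev (x :: t)) b).
  exists (size p); split; first by rewrite Ep /=; lia.
  by rewrite flip_size Ep rev_cons.
have hr : size (rev (x :: t)) = size q' by rewrite size_rev.
have cr : compatible (rev (x :: t)) q'.
  apply: (@compat_catr _ _ [:: b]) => a; rewrite !cats1 -Eq -cpq Ep -cats1 count_cat count_rev /=; lia.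
have br : bin (rev (x :: t)) by move: bp; rewrite Ep /bin all_rev /=; case/andP.
have hlt : size q' < m by rewrite -hq Eq size_rcons.
have h3 := IH _ hlt _ _ hr erefl br cr.
have h4 := @reach_app _ _ _ [:: b] h3.
have h1' : reach 1 p (rev (x :: t) ++ [:: b]) by rewrite cats1.
have := @reach_cat _ _ _ _ _ h1' h4; rewrite !cats1 -Eq.
have -> : 1 + (size q').-1 = m.-1 by rewrite -hq Eq size_rcons -ht /=.
done.
Qed.

Lemma other a b z : a <= 1 -> b <= 1 -> z <= 1 -> a != b -> z != b -> z = a.
Proof. move=> ha hb hz /eqP hab /eqP hzb; lia. Qed.

Lemma ub m : UB m.
Proof.
elim/ltn_ind: m => m IH p q hp hq bp cpq.
have bq := @compat_bin _ _ bp cpq.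
case: m IH hp hq => [|[|m]] IH hp hq.
- by move/size0nil: hp => ->; move/size0nil: hq => ->.
- case: p hp bp cpq => [|a [|? ?]] // _ bp cpq; case: q hq bq cpq => [|b [|? ?]] // _ bq cpq.
  have := cpq a; rewrite /= eqxx; case: (eqVneq b a) => [-> //|] /=; lia.
case/lastP: p hp bp cpq => [//|p1 a] hp bp cpq.
case/lastP: q hq bq cpq => [//|q1 b] hq bq cpq.
case: (eqVneq a b) => [Eab|nab].
  subst b.
  have c1 : compatible p1 q1 by apply: (@compat_catr _ _ [:: a]); rewrite !cats1.
  have b1 : bin p1 by move: bp; rewrite -cats1 /bin all_cat; case/andP.
  have h := IH m.+1 (ltnSn _) p1 q1 _ _ b1 c1.
  move: hp hq; rewrite !size_rcons => -[hp] [hq].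
  have := @reach_app _ _ _ [:: a] (h hp hq); rewrite !cats1 => h'.
  have sp : 1 <= size (rcons p1 a) by rewrite size_rcons.
  exact: (@reach_pad m m.+1 _ _ sp (leqnSn _) h').
have ha : a <= 1 by move/allP: bp; apply; rewrite mem_rcons mem_head.
have hb : b <= 1 by move/allP: bq; apply; rewrite mem_rcons mem_head.
have [x [t Ep]] : exists x t, rcons p1 a = x :: t.
  by case E: (rcons p1 a) => [|x t]; [move: hp; rewrite E | exists x, t].
have [y [t' Eq]] : exists y t', rcons q1 b = y :: t'.
  by case E: (rcons q1 b) => [|y t']; [move: hq; rewrite E | exists y, t'].
have hx : x <= 1 by move/allP: bp; apply; rewrite Ep mem_head.
have hy : y <= 1 by move/allP: bq; apply; rewrite Eq mem_head.
case: (eqVneq x b) => [Exb|nxb].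
  subst x; exact: (@fix1 _ IH _ _ _ _ _ hp hq Ep erefl bp cpq).
case: (eqVneq y a) => [Eya|nya].
  subst y; apply: reach_sym; exact: (@fix1 _ IH _ _ _ _ _ hq hp Eq erefl bq (@compat_sym _ _ cpq)).
have Exa : x = a by apply: (@other _ _ _ ha hb hx nab nxb).
have nba : b != a by rewrite eq_sym.
have Eyb : y = b by apply: (@other _ _ _ hb ha hy nba nya).
subst x y.
have [p2 [c Ep1]] : exists p2 c, p1 = rcons p2 c.
  by case/lastP E: p1 => [|p2 c]; [move: hp; rewrite E | exists p2, c].
have [q2 [d Eq1]] : exists q2 d, q1 = rcons q2 d.
  by case/lastP E: q1 => [|q2 d]; [move: hq; rewrite E | exists q2, d].
have hc : c <= 1 by move/allP: bp; apply; rewrite Ep1 mem_rcons in_cons mem_rcons mem_head orbT.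
have hd : d <= 1 by move/allP: bq; apply; rewrite Eq1 mem_rcons in_cons mem_rcons mem_head orbT.
have Pcat : rcons p1 a = p2 ++ [:: c; a] by rewrite Ep1 -!cats1 -catA.
have Qcat : rcons q1 b = q2 ++ [:: d; b] by rewrite Eq1 -!cats1 -catA.
have bt : b \in t.
  have : b \in rcons p1 a by rewrite (@compat_mem _ _ _ cpq) mem_rcons mem_head.
  by rewrite Ep in_cons (negbTE nba).
have at' : a \in t'.
  have : a \in rcons q1 b by rewrite -(@compat_mem _ _ _ cpq) mem_rcons mem_head.
  by rewrite Eq in_cons (negbTE nab).
case: (eqVneq d a) => [Eda|nda].
  subst d.
  have [u [y' [v [Eu ny']]]] := @L1 _ _ _ nab bt.
  have Ey' : y' = a by apply: (@other _ _ _ ha hb _ nab ny'); move/allP: bp; apply; rewrite Ep Eu mem_cat inE eqxx orbT.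
  subst y'; rewrite Ep in hp bp cpq *.
  exact: (@branch _ IH _ _ _ _ _ _ _ hp hq Eu Qcat bp cpq).
have Edb : d = b by apply: (@other _ _ _ hb ha hd nba nda).
subst d.
case: (boolP (nobb b (a :: t))) => [nb|].
  case: (eqVneq c b) => [Ecb|ncb].
    subst c.
    have [u [y' [v [Eu ny']]]] := @L1 _ _ _ nba at'.
    have Ey' : y' = b by apply: (@other _ _ _ hb ha _ nba ny'); move/allP: bq; apply; rewrite Eq Eu mem_cat inE eqxx orbT.
    subst y'; rewrite Eq in hq bq cpq *.
    apply: reach_sym; exact: (@branch _ IH _ _ _ _ _ _ _ hq hp Eu Pcat bq (@compat_sym _ _ cpq)).
  have Eca : c = a by apply: (@other _ _ _ ha hb hc nab ncb).
  subst c.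
  case: (boolP (nobb a (b :: t'))) => [na|].
    exfalso.
    have allp : all (fun z => (z == a) || (z == b)) (a :: t).
      apply/allP => z hz; have : z <= 1 by move/allP: bp; apply; rewrite Ep.
      case: (eqVneq z b) => [->|nzb hz1]; first by move=> _; apply/orP; right.
      by apply/orP; left; apply/eqP; apply: (@other _ _ _ ha hb hz1 nab nzb).
    have allq : all (fun z => (z == b) || (z == a)) (b :: t').
      apply/allP => z hz; have : z <= 1 by move/allP: bq; apply; rewrite Eq.
      case: (eqVneq z a) => [->|nza hz1]; first by move=> _; apply/orP; right.
      by apply/orP; left; apply/eqP; apply: (@other _ _ _ hb ha hz1 nba nza).
    have h1 := @count_nobb _ _ _ _ nab allp nb.
    have h2 := @count_nobb _ _ _ _ nba allq na.
    have l1 : last a t = a by have := last_rcons 0 p1 a; rewrite Ep.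
    have l2 : last b t' = b by have := last_rcons 0 q1 b; rewrite Eq.
    move: h1 h2; rewrite l1 l2 !eqxx (negbTE nab) (negbTE nba) -Ep -Eq (cpq a) (cpq b) /=; lia.
  move/nobbP => [u [v Eu]].
  rewrite Eq in hq bq cpq *.
  apply: reach_sym; exact: (@branch _ IH _ _ _ _ _ _ _ hq hp Eu Pcat bq (@compat_sym _ _ cpq)).
move/nobbP => [u [v Eu]].
rewrite Ep in hp bp cpq *.
exact: (@branch _ IH _ _ _ _ _ _ _ hp hq Eu Qcat bp cpq).
Qed.

Fixpoint alt (n : nat) : seq nat :=
  match n with 0 => [::] | n'.+1 => (~~ odd n' : nat) :: alt n' end.
Definition thard n : seq nat := nseq (n - n./2) 1 ++ nseq n./2 0.

Lemma size_alt n : size (alt n) = n.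
Proof. by elim: n => //= n ->. Qed.

Lemma count_alt x n : count_mem x (alt n) = (x == 1) * (n - n./2) + (x == 0) * n./2.
Proof.
elim: n => [|n IH] /=; first by rewrite !muln0.
rewrite IH uphalf_half {IH}; have := odd_double_half n.
case: (odd n) => /=; case: x => [|[|x]] /=; lia.
Qed.

Lemma count_thard x n : count_mem x (thard n) = (x == 1) * (n - n./2) + (x == 0) * n./2.
Proof. rewrite /thard count_cat !count_nseq /= !(eq_sym x) //. Qed.

Lemma bpf_alt n : bpf (~~ odd n) (rcons (alt n) 0) = n.+1.
Proof.
elim: n => [|n IH] //=.
rewrite IH; case: (odd n) => //.
Qed.

Lemma Q_alt n : Q (alt n.+1) = n.+1.
Proof. by rewrite /Q /= bpf_alt. Qed.

Lemma bpf_nseq x k : bpf x (nseq k x) = 0.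
Proof. by elim: k => //= k ->; rewrite eqxx. Qed.

Lemma lN (x k : nat) : last x (nseq k x) = x.
Proof. by elim: k. Qed.

Lemma Q_thard n : 2 <= n -> Q (thard n) = 1.
Proof.
move=> hn; rewrite /Q /thard.
have h1 : 0 < n - n./2 by have := odd_double_half n; lia.
have h2 : 0 < n./2 by have := odd_double_half n; case: (odd n) => /=; lia.
case: (n - n./2) h1 => // a _; case: n./2 h2 => // b _.
by rewrite /= -cats1 -catA bpf_cat bpf_nseq lN /= bpf_cat bpf_nseq lN.
Qed.

Lemma inS_of n s : 2 <= n -> size s = n ->
  (forall x, count_mem x s = (x == 1) * (n - n./2) + (x == 0) * n./2) -> inS n 2 s.
Proof.
move=> hn hs hc; split => // x.
have h1 : 0 < n - n./2 by have := odd_double_half n; lia.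
have h2 : 0 < n./2 by have := odd_double_half n; case: (odd n) => /=; lia.
rewrite mem_count hc; case: x => [|[|x]] /=; split => //; lia.
Qed.

Theorem theorem5p1 (n : nat) : 2 <= n -> is_delta n 2 (n - 1).
Proof.
move=> hn; split.
  move=> s t [hs ms] [ht mt] cst.
  have bs : bin s by apply/allP => x /ms.
  have hr := ub n s t hs ht bs cst.
  have [d [hd hmin]] := @ex_min (fun k => reach k s t) _ hr.
  exists d; split; first by split.
  by rewrite subn1; apply: hmin.
exists (alt n), (thard n).
have sa : size (alt n) = n by rewrite size_alt.
have st : size (thard n) = n by rewrite /thard size_cat !size_nseq; have := odd_double_half n; lia.
have cst : compatible (alt n) (thard n) by move=> x; rewrite count_alt count_thard.
split => //.
- exact: inS_of hn sa (@count_alt^~ n).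
- exact: inS_of hn st (@count_thard^~ n).
split.
  have bs : bin (alt n).
    apply/allP => x; rewrite mem_count count_alt; case: x => [|[|x]] //=; lia.
  by rewrite subn1; have := ub n _ _ sa st bs cst.
move=> k hk; have := @reach_Q _ _ _ hk.
case: n hn sa st cst hk => [|n] // hn _ _ _ _.
rewrite Q_alt Q_thard //; lia.
Qed.
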